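(* With the setup in the context, let $X\subseteq E\setminus B$, $\mathbf{M}\in A^X$, $\mathbf{w}\in D_{X,\mathbf{M}}$, $Y\subseteq E$ and $\mathbf{t}=\mathbf{w}_Y$. Then $\left|\{\mathbf{m}\in A^{E\setminus B}:\ \Omega_{\mathbf{t},Y,\mathbf{M}}(\mathbf{m})\neq\emptyset\}\right|=|A|^{\,n-k-|X|-\rho_X(Y)}.$
   Context: An almost affine code over a finite alphabet $A$ of length $n$ and dimension $k$ is a subset $C\subseteq A^n$ with $|C|=|A|^k$ such that for every $X\subseteq E=\{1,\dots,n\}$, $\log_{|A|}|C_X|$ is a nonnegative integer ($C_X$ = projection onto coordinates $X$); its associated matroid $M_C$ has rank function $r(X)=\log_{|A|}|C_X|$. Setup: $C$ is an almost affine code of length $n$ and dimension $k$ over $A$ with matroid rank function $r$; $B\subseteq E$ is a basis of $M_C$; $\varphi:A\times A\to A$ is such that for every $y\in A$ both $\varphi(y,\cdot)$ and $\varphi(\cdot,y)$ are bijections. For $\mathbf{m}\in A^{E\setminus B}$, $\Phi_{\mathbf{m}}(\mathbf{w})_i=\mathbf{w}_i$ for $i\in B$ and $=\varphi(\mathbf{w}_i,\mathbf{m}_i)$ for $i\in E\setminus B$, and $C_{\mathbf{m}}=\Phi_{\mathbf{m}}(C)$ (an almost affine code with the same matroid $M_C$; the $C_{\mathbf{m}}$ partition $A^E$). For $X\subseteq E\setminus B$, $\mathbf{M}\in A^X$: $D_{X,\mathbf{M}}=\bigcup_{\mathbf{m}_X=\mathbf{M}}C_{\mathbf{m}}$, an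 almost affine code with rank function $r_{D}(Y)=|Y\setminus(B\cup X)|+r(Y\cap(B\cup X))$, and $\rho_X(Y)=r_D(Y)-r(Y)$. For $\mathbf{t}\in A^Y$ and $\mathbf{m}\in A^{E\setminus B}$: $\Omega_{\mathbf{t},Y,\mathbf{M}}(\mathbf{m})=\emptyset$ if $\mathbf{m}_X\neq\mathbf{M}$, and $\Omega_{\mathbf{t},Y,\mathbf{M}}(\mathbf{m})=\{\mathbf{w}\in C_{\mathbf{m}}:\mathbf{w}_Y=\mathbf{t}\}$ otherwise. *)

(* Defs.v *)
From mathcomp Require Import all_boot.
Set Implicit Arguments. Unset Strict Implicit. Unset Printing Implicit Defensive.

Section AlmostAffine.
Variables (A : finType) (n : nat).

(* Words of length n over A: functions E = 'I_n -> A. *)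
Definition word := {ffun 'I_n -> A}.

Definition restr (X : {set 'I_n}) (w : word) : {ffun 'I_n -> option A} :=
  [ffun i => if i \in X then Some (w i) else None].

Definition proj (C : {set word}) (X : {set 'I_n}) := restr X @: C.

Definition crank (C : {set word}) (X : {set 'I_n}) : nat :=
  trunc_log #|A| #|proj C X|.

Definition almost_affine (k : nat) (C : {set word}) : Prop :=
  #|C| = #|A| ^ k /\ forall X : {set 'I_n}, exists r : nat, #|proj C X| = #|A| ^ r.

Definition is_basis (C : {set word}) (B : {set 'I_n}) : Prop :=
  crank C B = #|B| /\ #|B| = crank C setT.

Definition quasigroup_op (phi : A -> A -> A) : Prop :=
  forall y : A, bijective (phi y) /\ bijective (phi^~ y).

Definition msg (B : {set 'I_n}) := {ffun {i : 'I_n | i \notin B} -> A}.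
Definition xmsg (X : {set 'I_n}) := {ffun {i : 'I_n | i \in X} -> A}.

Definition Phi (B : {set 'I_n}) (phi : A -> A -> A) (m : msg B) (w : word) : word :=
  [ffun i => if (insub i : option {j : 'I_n | j \notin B}) is Some j
             then phi (w i) (m j) else w i].

Definition Cm (B : {set 'I_n}) (phi : A -> A -> A) (C : {set word}) (m : msg B) :
  {set word} := Phi phi m @: C.

Definition agree (B X : {set 'I_n}) (m : msg B) (M : xmsg X) : bool :=
  [forall j : {i : 'I_n | i \in X},
     if (insub (val j) : option {i : 'I_n | i \notin B}) is Some j'
     then m j' == M j else false].

Definition Dcode (B : {set 'I_n}) (phi : A -> A -> A) (C : {set word})
  (X : {set 'I_n}) (M : xmsg X) : {set word} :=
  \bigcup_(m : msg B | agree m M) Cm phi C m.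

Definition rho (B : {set 'I_n}) (phi : A -> A -> A) (C : {set word})
  (X : {set 'I_n}) (M : xmsg X) (Y : {set 'I_n}) : nat :=
  crank (Dcode B phi C M) Y - crank C Y.

Definition Omega (B : {set 'I_n}) (phi : A -> A -> A) (C : {set word})
  (t : {ffun 'I_n -> option A}) (Y : {set 'I_n}) (X : {set 'I_n}) (M : xmsg X)
  (m : msg B) : {set word} :=
  if agree m M then [set w' in Cm phi C m | restr Y w' == t] else set0.

End AlmostAffine.

(* Main.v *)
Require Import Defs.
From mathcomp Require Import all_boot.
From Stdlib Require Import Classical_Prop.
From mathcomp Require Import zify.
Set Implicit Arguments. Unset Strict Implicit. Unset Printing Implicit Defensive.


Lemma pair_card (T U V : finType) (D : {set T}) (f : T -> U) (g : T -> V) :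
  {in D &, forall x y, g x = g y -> f x = f y} ->
  #|[set (f x, g x) | x in D]| = #|g @: D|.
Proof.
move=> H.
have -> : g @: D = snd @: [set (f x, g x) | x in D].
  by rewrite -imset_comp; apply: eq_imset.
rewrite [RHS]card_in_imset //.
move=> p q /imsetP[x xD ->] /imsetP[y yD ->] /= e.
by rewrite (H x y xD yD e) e.
Qed.

Lemma imset_card_le (T U V : finType) (D : {set T}) (f : T -> U) (g : T -> V) :
  {in D &, forall x y, g x = g y -> f x = f y} ->
  #|f @: D| <= #|g @: D|.
Proof.
move=> H; rewrite -(pair_card H).
have -> : f @: D = fst @: [set (f x, g x) | x in D].
  by rewrite -imset_comp; apply: eq_imset.
exact: leq_imset_card.
Qed.

Lemma imset_card_eq (T U V : finType) (D : {set T}) (f : T -> U) (g : T -> V) :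
  {in D &, forall x y, g x = g y -> f x = f y} ->
  {in D &, forall x y, f x = f y -> g x = g y} ->
  #|f @: D| = #|g @: D|.
Proof.
by move=> H1 H2; apply/eqP; rewrite eqn_leq (imset_card_le H1) (imset_card_le H2).
Qed.

Lemma imset_card_inj (T U V : finType) (D : {set T}) (f : T -> U) (g : T -> V) :
  {in D &, forall x y, g x = g y -> f x = f y} ->
  #|f @: D| = #|g @: D| ->
  {in D &, forall x y, f x = f y -> g x = g y}.
Proof.
move=> H E x y xD yD fe.
have P := pair_card H.
have injf : {in [set (f x, g x) | x in D] &, injective fst}.
  apply/imset_injP; rewrite P -E -imset_comp; apply/eqP; apply: eq_card => z.
  by congr (z \in _); apply: eq_imset.
have := injf (f x, g x) (f y, g y).
rewrite !imset_f // => /(_ isT isT fe) [] _ ->.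
by [].
Qed.

Section Code.
Variables (A : finType) (n : nat).
Implicit Types (C : {set word A n}) (S : {set 'I_n}) (x y : word A n).

Definition agreeon S x y := [forall i in S, x i == y i].

Lemma agreeonP S x y : reflect (forall i, i \in S -> x i = y i) (agreeon S x y).
Proof. by apply: (iffP forall_inP) => H i iS; apply/eqP/H. Qed.

Lemma agreeonE S x y : agreeon S x y -> forall i, i \in S -> x i = y i.
Proof. by move/agreeonP. Qed.

Lemma restr_eq S x y : (restr S x == restr S y) = agreeon S x y.
Proof.
apply/eqP/agreeonP => [H i iS | H].
  by have := congr1 (fun f : {ffun 'I_n -> option A} => f i) H; rewrite !ffunE iS => -[].
by apply/ffunP => i; rewrite !ffunE; case: ifP => // iS; rewrite H.
Qed.

Lemma agreeon_sub S S' x y : S \subset S' -> agreeon S' x y -> agreeon S x y.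
Proof. by move=> sS /agreeonP H; apply/agreeonP => i iS; apply: H; apply: (subsetP sS). Qed.

Lemma agreeonU S S' x y : agreeon S x y -> agreeon S' x y -> agreeon (S :|: S') x y.
Proof.
by move=> /agreeonP H /agreeonP H'; apply/agreeonP => i; rewrite inE => /orP[/H|/H'].
Qed.

Lemma agreeon_sym S x y : agreeon S x y = agreeon S y x.
Proof. by apply/agreeonP/agreeonP => H i /H. Qed.

Lemma agreeon_trans S x y z : agreeon S x y -> agreeon S y z -> agreeon S x z.
Proof. by move=> /agreeonP H /agreeonP H'; apply/agreeonP => i iS; rewrite H // H'. Qed.

Definition det C S S' := {in C &, forall c c', agreeon S c c' -> agreeon S' c c'}.

Lemma proj_le C S S' : S \subset S' -> #|proj C S| <= #|proj C S'|.
Proof.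
move=> sS; apply: imset_card_le => c c' _ _ /eqP; rewrite restr_eq => H.
by apply/eqP; rewrite restr_eq; apply: agreeon_sub H.
Qed.

Lemma proj_det_eq C S S' : S \subset S' -> det C S S' -> #|proj C S| = #|proj C S'|.
Proof.
move=> sS dS; apply: imset_card_eq => c c' cC c'C /eqP; rewrite restr_eq => H;
  apply/eqP; rewrite restr_eq; [exact: agreeon_sub H | exact: dS].
Qed.

Lemma proj_eq_det C S S' : S \subset S' -> #|proj C S| = #|proj C S'| -> det C S S'.
Proof.
move=> sS E c c' cC c'C H.
have H1 : restr S c = restr S c' by apply/eqP; rewrite restr_eq.
rewrite -restr_eq; apply/eqP; apply: (imset_card_inj _ E cC c'C H1).
move=> d d' _ _ /eqP; rewrite restr_eq => H'.
by apply/eqP; rewrite restr_eq; apply: agreeon_sub H'.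
Qed.

Lemma card_ext S I x0 :
  #|restr S @: [set x | agreeon I x x0]| = #|A| ^ #|S :\: I|.
Proof.
set K := S :\: I.
pose ext (g : {ffun {i : 'I_n | i \in K} -> A}) : word A n :=
  [ffun i => if insub i is Some j then g j else x0 i].
have -> : restr S @: [set x | agreeon I x x0] = (restr S \o ext) @: [set: {ffun _ -> A}].
  apply/setP => p; apply/imsetP/imsetP => [[x xin ->]|[g _ ->]].
  - exists [ffun j => x (val j)] => //; apply/eqP; rewrite /= restr_eq.
    apply/agreeonP => i iS; rewrite ffunE.
    case: insubP => [j jK vj|]; first by rewrite ffunE vj.
    rewrite inE iS andbT negbK => iI.
    by move: xin; rewrite inE => /agreeonP ->.
  - exists (ext g) => //; rewrite inE; apply/agreeonP => i iI; rewrite ffunE.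
    by case: insubP => // j; rewrite inE iI.
rewrite card_in_imset ?cardsT ?card_ffun ?card_sig //.
move=> g g' _ _ /= /eqP; rewrite restr_eq => /agreeonP H; apply/ffunP => j.
have jS : val j \in S by have := valP j; rewrite inE => /andP[].
by have := H _ jS; rewrite !ffunE valK.
Qed.

End Code.

Section Free.
Variables (A : finType) (n : nat) (C : {set word A n}).
Hypothesis hA : 1 < #|A|.
Hypothesis haff : forall S : {set 'I_n}, exists r, #|proj C S| = #|A| ^ r.

Definition free S := #|proj C S| = #|A| ^ #|S|.

Lemma proj_full_card S (x0 : word A n) : #|restr S @: [set x | agreeon set0 x x0]| = #|A| ^ #|S|.
Proof. by rewrite card_ext setD0. Qed.

Lemma proj_sub S (x0 : word A n) : proj C S \subset restr S @: [set x | agreeon set0 x x0].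
Proof.
apply/subsetP => p /imsetP[c _ ->]; apply: imset_f.
by rewrite inE; apply/agreeonP => i; rewrite inE.
Qed.

Lemma proj_bound S : #|proj C S| <= #|A| ^ #|S|.
Proof.
case: (pickP (fun _ : word A n => true)) => [x0 _|none].
  by rewrite -(proj_full_card S x0); apply: subset_leq_card; apply: proj_sub.
have -> : proj C S = set0.
  by apply/setP => p; rewrite inE; apply/imsetP => -[c _ _]; have := none c.
by rewrite cards0.
Qed.

Lemma free_surj S : free S -> forall x, exists2 c, c \in C & agreeon S c x.
Proof.
move=> fS x.
have E : proj C S = restr S @: [set y | agreeon set0 y x].
  apply/eqP; rewrite eqEcard proj_sub proj_full_card fS leqnn //.
have : restr S x \in proj C S.
  by rewrite E; apply: imset_f; rewrite inE; apply/agreeonP => i; rewrite inE.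
by case/imsetP => c cC /eqP; rewrite restr_eq agreeon_sym => H; exists c.
Qed.

Lemma det_trans S1 S2 S3 : det C S1 S2 -> det C S2 S3 -> det C S1 S3.
Proof. by move=> d1 d2 c c' cC c'C /(d1 _ _ cC c'C) /(d2 _ _ cC c'C). Qed.

Lemma ext_free I : free I -> forall Z, exists J : {set 'I_n},
  [/\ I \subset J, J \subset I :|: Z, free J & det C J (I :|: Z)].
Proof.
move=> fI Z; rewrite -(set_enum Z); elim: (enum Z) => [|j s [J [IJ JZ fJ dJ]]].
  exists I; split=> //.
  - by rewrite (_ : [set x in [::]] = set0) ?setU0 //; apply/setP => x; rewrite !inE.
  - by move=> c c' _ _; apply: agreeon_sub; apply/subsetP => x; rewrite !inE orbF.
have Es : [set x in j :: s] = j |: [set x in s] by apply/setP => x; rewrite !inE.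
rewrite Es.
have sub1 : I :|: [set x in s] \subset I :|: (j |: [set x in s]).
  by apply/subsetP => x; rewrite !inE => /orP[->|->]; rewrite ?orbT.
case: (classic (det C J [set j])) => [dj|ndj].
  exists J; split=> //; first exact: subset_trans JZ sub1.
  move=> c c' cC c'C H.
  have := agreeonU (dJ _ _ cC c'C H) (dj _ _ cC c'C H).
  by apply: agreeon_sub; apply/subsetP => x; rewrite !inE; case: (x == j); rewrite ?orbT //= orbF.
exists (j |: J); split.
- by apply: subset_trans IJ _; apply/subsetP => x; rewrite !inE => ->; rewrite orbT.
- apply/subsetP => x; rewrite !inE => /orP[->|]; first by rewrite !orbT.
  by move/(subsetP JZ); rewrite !inE => /orP[->|->]; rewrite ?orbT.
- rewrite /free; have [r Er] := haff (j |: J); rewrite Er.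
  have sJ : J \subset j |: J by apply/subsetP => x; rewrite !inE => ->; rewrite orbT.
  have le1 := proj_le C sJ; rewrite Er fJ leq_exp2l // in le1.
  have le2 := proj_bound (j |: J); rewrite Er leq_exp2l // in le2.
  have jJ : j \notin J.
    apply: contra_notN ndj => jJ c c' _ _ /agreeonP H; apply/agreeonP => x.
    by rewrite inE => /eqP ->; apply: H.
  rewrite cardsU1 jJ add1n in le2.
  suff : r != #|J| by move=> ne; congr (_ ^ _); apply/eqP; rewrite cardsU1 jJ add1n eqn_leq le2 ltn_neqAle eq_sym ne.
  apply/eqP => rJ; apply: ndj.
  have := proj_eq_det (C:=C) sJ; rewrite Er fJ rJ => /(_ erefl) dd.
  by move=> c c' cC c'C /(dd _ _ cC c'C); apply: agreeon_sub; apply/subsetP => x; rewrite !inE => ->.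
- move=> c c' cC c'C H.
  have HJ : agreeon J c c' by apply: agreeon_sub H; apply/subsetP => x; rewrite !inE => ->; rewrite orbT.
  have := agreeonU (dJ _ _ cC c'C HJ) H.
  apply: agreeon_sub; apply/subsetP => x; rewrite !inE.
  by case/or3P=> ->; rewrite ?orbT.
Qed.

End Free.

Section Phi.
Variables (A : finType) (n : nat) (phi : A -> A -> A).
Hypothesis hphi : quasigroup_op phi.

Definition inv2 a z := odflt z [pick y | phi a y == z].
Definition inv1 z y := odflt z [pick x | phi x y == z].

Lemma phi_inj1 y : injective (phi^~ y).
Proof. by case: (hphi y) => _ /bij_inj. Qed.
Lemma phi_inj2 y : injective (phi y).
Proof. by case: (hphi y) => /bij_inj. Qed.

Lemma inv2K a z : phi a (inv2 a z) = z.
Proof.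
rewrite /inv2; case: pickP => [y /eqP //|none].
case: (hphi a) => -[g _ gK] _.
by have := none (g z); rewrite gK eqxx.
Qed.

Lemma inv2P a y : inv2 a (phi a y) = y.
Proof. by apply: (@phi_inj2 a); rewrite inv2K. Qed.

Lemma inv1K z y : phi (inv1 z y) y = z.
Proof.
rewrite /inv1; case: pickP => [x /eqP //|none].
case: (hphi y) => _ [g _ gK].
by have := none (g z); rewrite /= gK eqxx.
Qed.

Variables (B : {set 'I_n}) (d : word A n).

Definition mw (m : msg A B) : word A n :=
  [ffun i => if (insub i : option {j : 'I_n | j \notin B}) is Some j then m j else d i].

Lemma mw_val m j : mw m (val j) = m j.
Proof. by rewrite ffunE valK. Qed.

Lemma mw_mk (f : 'I_n -> A) i : i \notin B -> mw [ffun j => f (val j)] i = f i.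
Proof. by move=> iB; rewrite ffunE; case: insubP => [j _ vj|]; [rewrite ffunE vj | rewrite iB]. Qed.

Lemma msg_eq (m m' : msg A B) : (forall i, i \notin B -> mw m i = mw m' i) -> m = m'.
Proof. by move=> H; apply/ffunP => j; rewrite -mw_val -(mw_val m') H //; apply: (valP j). Qed.

Lemma PhiE (m : msg A B) v i : Phi phi m v i = if i \in B then v i else phi (v i) (mw m i).
Proof.
rewrite !ffunE; case: insubP => [j jB vj|]; last by rewrite negbK => ->.
by case: ifP jB => // ->.
Qed.

Variable (X : {set 'I_n}).
Hypothesis hX : X \subset ~: B.

Definition Mw (M : xmsg A X) : word A n :=
  [ffun i => if (insub i : option {j : 'I_n | j \in X}) is Some j then M j else d i].

Lemma agreeP (m : msg A B) (M : xmsg A X) :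
  reflect (forall i, i \in X -> mw m i = Mw M i) (agree m M).
Proof.
apply: (iffP forallP) => H.
  move=> i iX; have := H (Sub i iX); rewrite SubK.
  rewrite /Mw /mw !ffunE (insubT (fun j => j \in X) iX) /=.
  by case: insubP => [j' _ _ /eqP -> // | ]; rewrite ?negbK.
move=> j; have := H _ (valP j); rewrite /Mw !ffunE valK.
case: insubP => [j' _ _ -> //|]; rewrite negbK => jB.
by have := subsetP hX _ (valP j); rewrite inE jB.
Qed.

Lemma phiBX (m m' : msg A B) (M : xmsg A X) c c' i :
  agree m M -> agree m' M -> i \in B :|: X ->
  (Phi phi m c i == Phi phi m' c' i) = (c i == c' i).
Proof.
move=> /agreeP am /agreeP am'; rewrite !PhiE inE; case: (i \in B) => //= iX.
by rewrite am // am' // (inj_eq (@phi_inj1 _)).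
Qed.

End Phi.

Lemma omegaP (A : finType) (n : nat) (C : {set word A n}) (B : {set 'I_n})
  (phi : A -> A -> A) (X : {set 'I_n}) (M : xmsg A X) (w : word A n)
  (Y : {set 'I_n}) (m : msg A B) :
  reflect (agree m M /\ exists2 c, c \in C & agreeon Y (Phi phi m c) w)
          (Omega phi C (restr Y w) Y M m != set0).
Proof.
rewrite /Omega; case: (agree m M); last by rewrite eqxx; constructor => -[].
rewrite /=; apply: (iffP idP) => [/set0Pn[v]|[_ [c cC H]]].
  rewrite inE => /andP[/imsetP[c cC ->]]; rewrite restr_eq => H.
  by split=> //; exists c.
by apply/set0Pn; exists (Phi phi m c); rewrite inE imset_f //= restr_eq.
Qed.

Lemma Dcode_P (A : finType) (n : nat) (C : {set word A n}) (B : {set 'I_n})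
  (phi : A -> A -> A) (X : {set 'I_n}) (M : xmsg A X) v :
  reflect (exists m : msg A B, agree m M /\ exists2 c, c \in C & v = Phi phi m c)
          (v \in Dcode B phi C M).
Proof.
apply: (iffP bigcupP) => [[m am /imsetP[c cC ->]]|[m [am [c cC ->]]]].
  by exists m; split=> //; exists c.
by exists m => //; apply: imset_f.
Qed.

Theorem mainTheorem9 (A : finType) (n k : nat) (C : {set word A n})
  (hA : 1 < #|A|) (hC : almost_affine k C)
  (B : {set 'I_n}) (hB : is_basis C B)
  (phi : A -> A -> A) (hphi : quasigroup_op phi)
  (X : {set 'I_n}) (hX : X \subset ~: B) (M : xmsg A X)
  (w : word A n) (hw : w \in Dcode B phi C M)
  (Y : {set 'I_n}) :
  #|[set m : msg A B | Omega phi C (restr Y w) Y M m != set0]|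
  = #|A| ^ (n - k - #|X| - rho B phi C M Y).
Proof.
have [hCk haff] := hC.
have projT : #|proj C setT| = #|C|.
  apply: card_in_imset => c c' _ _ /eqP; rewrite restr_eq => /agreeonP H.
  by apply/ffunP => i; apply: H; rewrite inE.
have kB : #|B| = k by rewrite hB.2 /crank projT hCk trunc_expnK.
have /Dcode_P [m0 [am0 [c0 c0C wE]]] := hw.
pose Z := Y :&: (B :|: X).
pose Q := Y :\: (B :|: X).
pose R := ~: B :\: (X :|: Y).
have free0 : free C set0.
  rewrite /free cards0 expn0; apply/eqP; rewrite eqn_leq.
  have := proj_bound C set0; rewrite cards0 expn0 => -> /=.
  by rewrite card_gt0; apply/set0Pn; exists (restr set0 c0); apply: imset_f.
have [I [_ IZ fI dI]] := ext_free hA haff free0 Z.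
rewrite set0U in IZ dI.
have [I' [II' I'Y fI' dI']] := ext_free hA haff fI Y.
have IY : I \subset Y by apply: subset_trans IZ (subsetIl _ _).
rewrite (setUidPr IY) in I'Y dI'.
have phiZ : forall (m : msg A B) (c : word A n) (i : 'I_n), agree m M -> i \in B :|: X ->
    (Phi phi m c i == w i) = (c i == c0 i).
  by move=> m c i am iBX; rewrite {1}wE (phiBX hphi w hX c c0 am am0 iBX).
have inR : forall i, (i \in R) = [&& i \notin B, i \notin X & i \notin Y].
  by move=> i; rewrite /R !inE negb_or andbC.
have inZ : forall i, (i \in Z) = (i \in Y) && ((i \in B) || (i \in X)).
  by move=> i; rewrite /Z !inE.
have inQ : forall i, (i \in Q) = [&& i \in Y, i \notin B & i \notin X].
  by move=> i; rewrite /Q !inE negb_or andbC andbA.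
have XB : forall i, i \in X -> i \notin B.
  by move=> i /(subsetP hX); rewrite inE.
pose cx (x : word A n) : word A n := odflt c0 [pick c in C | agreeon I' c x].
have cxP : forall x, cx x \in C /\ agreeon I' (cx x) x.
  move=> x; rewrite /cx; case: pickP => [c /andP[-> ->] // | none].
  by have [c cC H] := free_surj fI' x; have := none c; rewrite cC H.
have cxZ : forall x, agreeon I x c0 -> agreeon Z (cx x) c0.
  move=> x xI; have [cC H] := cxP x; apply: (dI _ _ cC c0C).
  exact: agreeon_trans (agreeon_sub II' H) xI.
pose Mw0 := Mw w M.
pose fmf (x : word A n) (i : 'I_n) :=
  if i \in X then Mw0 i else if i \in R then x i else inv2 phi (cx x i) (w i).
pose fm (x : word A n) : msg A B := [ffun j => fmf x (val j)].
pose Dx := [set x : word A n | agreeon I x c0].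
have amP := agreeP w hX.
have fmA : forall x, agree (fm x) M.
  by move=> x; apply/amP => i iX; rewrite mw_mk ?XB // /fmf iX.
have S_eq : [set m : msg A B | Omega phi C (restr Y w) Y M m != set0] = fm @: Dx.
  apply/setP => m; rewrite inE; apply/omegaP/imsetP.
  - move=> [am [c cC H]].
    pose x : word A n := [ffun i => if i \in R then mw w m i else c i].
    have cZ : agreeon Z c c0.
      apply/agreeonP => i; rewrite inZ => /andP[iY iBX].
      apply/eqP; rewrite -(phiZ m c i am); first by apply/eqP; apply: (agreeonE H).
      by rewrite inE.
    have xD : x \in Dx.
      rewrite inE; apply/agreeonP => i iI; rewrite ffunE.
      have iZ := subsetP IZ i iI.
      have -> : (i \in R) = false by rewrite inR; move: iZ; rewrite inZ => /andP[-> _]; rewrite !andbF.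
      exact: (agreeonE cZ).
    exists x => //.
    have [cxC cxx] := cxP x.
    have cxc : agreeon Y (cx x) c.
      apply: (dI' _ _ cxC cC); apply/agreeonP => i iI'.
      rewrite (agreeonE cxx) // ffunE.
      by have := subsetP I'Y i iI'; rewrite inR => ->; rewrite !andbF.
    apply: (msg_eq (d:=w)) => i iB; rewrite mw_mk // /fmf.
    case: ifP => iX; first by move/amP: am => ->.
    case: ifP => iR; first by rewrite [x _]ffunE iR.
    have iY : i \in Y by move: iR; rewrite inR iB iX /=; case: (i \in Y).
    by rewrite (agreeonE cxc iY) -(agreeonE H iY) (PhiE phi w) (negbTE iB) inv2P.
  - move=> [x xD ->]; split; first exact: fmA.
    have [cxC cxx] := cxP x; exists (cx x) => //.
    apply/agreeonP => i iY; case iBX: (i \in B :|: X).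
      apply/eqP; rewrite phiZ //; apply/eqP; apply: (agreeonE (cxZ x _));
        by [move: xD; rewrite inE | rewrite inZ iY; move: iBX; rewrite inE].
    move: iBX; rewrite inE => /norP[iB iX].
    rewrite (PhiE phi w) (negbTE iB) mw_mk // /fmf (negbTE iX).
    by rewrite inR iY !andbF inv2K.
have card1 : #|fm @: Dx| = #|restr (R :|: I') @: Dx|.
  apply: imset_card_eq => x x' xD x'D.
  - move/eqP; rewrite restr_eq => H.
    have HI' : agreeon I' x x' by apply: agreeon_sub H; apply: subsetUr.
    have ecx : cx x = cx x'.
      rewrite /cx; congr odflt; apply: eq_pick => c /=; congr andb.
      apply/idP/idP => h; first exact: agreeon_trans h HI'.
      by apply: agreeon_trans h _; rewrite agreeon_sym.
    apply/ffunP => j; rewrite !ffunE /fmf ecx.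
    case: ifP => // _; case: ifP => // jR.
    by apply: (agreeonE H); rewrite inE jR.
  - move=> E; apply/eqP; rewrite restr_eq; apply: agreeonU.
      apply/agreeonP => i iR.
      have := congr1 (fun m => mw w m i) E.
      move: (iR); rewrite inR => /and3P[iB iX _].
      by rewrite !mw_mk // /fmf (negbTE iX) iR.
    have [cxC cxx] := cxP x; have [cx'C cxx'] := cxP x'.
    have xD' : agreeon I x c0 by move: xD; rewrite inE.
    have x'D' : agreeon I x' c0 by move: x'D; rewrite inE.
    have cxY : agreeon Y (cx x) (cx x').
      apply/agreeonP => i iY; case iBX: ((i \in B) || (i \in X)).
        have iZ : i \in Z by rewrite inZ iY iBX.
        by rewrite (agreeonE (cxZ x xD') iZ) (agreeonE (cxZ x' x'D') iZ).
      move/norP: iBX => [iB iX].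
      have := congr1 (fun m => mw w m i) E.
      have iR : (i \in R) = false by rewrite inR iY !andbF.
      rewrite !mw_mk // /fmf (negbTE iX) iR => e.
      apply: (@phi_inj1 _ _ hphi (inv2 phi (cx x i) (w i))) => /=.
      by rewrite {2}e !inv2K.
    apply/agreeonP => i iI'.
    rewrite -(agreeonE cxx iI') -(agreeonE cxx' iI').
    exact: (agreeonE cxY (subsetP I'Y i iI')).
have projD : #|proj (Dcode B phi C M) Y| = #|A| ^ #|Q :|: I|.
  have := card_ext (Q :|: I) set0 w; rewrite setD0 => <-.
  transitivity #|restr (Q :|: I) @: Dcode B phi C M|.
    apply: imset_card_eq => v v' vD v'D; move/eqP; rewrite restr_eq => H;
      apply/eqP; rewrite restr_eq; last first.
      by apply: agreeon_sub H; apply/subsetP => i; rewrite in_setU inQ => /orP[/andP[]//|/(subsetP IY)].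
    move: H; move/Dcode_P: vD => [m [am [c cC ->]]].
    move/Dcode_P: v'D => [m' [am' [c' c'C ->]]].
    move=> /agreeonP H.
    have cI : agreeon I c c'.
      apply/agreeonP => i iI; apply/eqP.
      have iBX : i \in B :|: X by move: (subsetP IZ i iI); rewrite inZ inE => /andP[].
      by rewrite -(phiBX hphi w hX c c' am am' iBX); apply/eqP; apply: H; rewrite inE iI orbT.
    have cZ := dI _ _ cC c'C cI.
    apply/agreeonP => i iY; case iBX: ((i \in B) || (i \in X)).
      by apply/eqP; rewrite (phiBX hphi w hX c c' am am' _) ?inE //; apply/eqP/(agreeonE cZ); rewrite inZ iY iBX.
    by apply: H; rewrite in_setU inQ iY; move/norP: iBX => [-> ->].
  apply: eq_card => p; apply/imsetP/imsetP => [[v _ ->] | [x _ ->]].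
    by exists v => //; rewrite inE; apply/agreeonP => i; rewrite inE.
  pose x1 : word A n := [ffun i => if i \in B then x i else inv1 phi (x i) (Mw0 i)].
  have [c cC cx1] := free_surj fI x1.
  pose m : msg A B := [ffun j => (fun i => if i \in X then Mw0 i else inv2 phi (c i) (x i)) (val j)].
  have am : agree m M by apply/amP => i iX; rewrite mw_mk ?XB // iX.
  exists (Phi phi m c); first by apply/Dcode_P; exists m; split=> //; exists c.
  symmetry; apply/eqP; rewrite restr_eq; apply/agreeonP => i; rewrite in_setU => /orP[iQ|iI].
    move: iQ; rewrite inQ => /and3P[_ iB iX].
    by rewrite (PhiE phi w) (negbTE iB) mw_mk // (negbTE iX) inv2K.
  rewrite (PhiE phi w) (agreeonE cx1 iI) ffunE.
  case iB: (i \in B); first done.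
  have iX : i \in X by move: (subsetP IZ i iI); rewrite inZ iB /= => /andP[_ ->].
  rewrite /m (mw_mk w (fun i => if i \in X then Mw0 i else inv2 phi (c i) (x i))) ?XB //= iX.
  by rewrite inv1K.
have crC : crank C Y = #|I'|.
  by rewrite /crank -(proj_det_eq I'Y dI') fI' trunc_expnK.
have crD : crank (Dcode B phi C M) Y = #|Q :|: I|.
  by rewrite /crank projD trunc_expnK.
have QIY : Q :|: I \subset Y.
  by apply/subsetP => i; rewrite in_setU inQ => /orP[/andP[]//|/(subsetP IY)].
have leI' : #|I'| <= #|Q :|: I|.
  have dQI : det C (Q :|: I) Y.
    move=> c c' cC c'C H.
    have cZ := dI _ _ cC c'C (agreeon_sub (subsetUr _ _) H).
    apply/agreeonP => i iY; case iBX: ((i \in B) || (i \in X)).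
      by apply: (agreeonE cZ); rewrite inZ iY iBX.
    by apply: (agreeonE H); rewrite in_setU inQ iY; move/norP: iBX => [-> ->].
  have E := proj_det_eq QIY dQI.
  have := proj_bound C (Q :|: I).
  by rewrite E -(proj_det_eq I'Y dI') fI' leq_exp2l.
have leII' : #|I| <= #|I'| by apply: subset_leq_card.
have cQI : #|Q :|: I| = #|Q| + #|I|.
  rewrite cardsU (_ : Q :&: I = set0) ?cards0 ?subn0 //.
  apply/setP => i; rewrite in_set0 in_setI inQ; apply/negbTE; apply/negP => /andP[/and3P[_ iB iX] iI].
  by move: (subsetP IZ i iI); rewrite inZ (negbTE iB) (negbTE iX) andbF.
have cRI : #|(R :|: I') :\: I| = #|R| + #|I'| - #|I|.
  rewrite cardsD (_ : (R :|: I') :&: I = I); last first.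
    by apply/setIidPr; apply: subset_trans II' (subsetUr _ _).
  rewrite cardsU (_ : R :&: I' = set0) ?cards0 ?subn0 //.
  apply/setP => i; rewrite in_set0 in_setI inR; apply/negbTE; apply/negP => /andP[/and3P[_ _ iY] iI'].
  by move: (subsetP I'Y i iI'); rewrite (negbTE iY).
have cB : #|R| + #|X| + #|Q| = n - k.
  have := cardsC B; rewrite card_ord kB => cBn.
  have e1 : ~: B = (R :|: X) :|: Q.
    apply/setP => i; rewrite in_setC !in_setU inR inQ.
    case iX: (i \in X); first by rewrite (negbTE (XB i iX)) !orbT.
    by case: (i \in B); case: (i \in Y).
  have d1 : R :&: X = set0.
    by apply/setP => i; rewrite in_set0 in_setI inR; case: (i \in X); rewrite ?andbF.
  have d2 : (R :|: X) :&: Q = set0.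
    by apply/setP => i; rewrite in_set0 in_setI in_setU inR inQ; case: (i \in X); case: (i \in Y); rewrite /= ?andbF.
  have := cardsU (R :|: X) Q; rewrite d2 cards0 subn0 -e1.
  rewrite cardsU d1 cards0 subn0 => e2.
  rewrite -e2; lia.
rewrite S_eq card1 card_ext; congr (_ ^ _).
rewrite /rho crC crD cRI cQI.
move: cB leI' leII'; rewrite cQI; lia.
Qed.
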